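(* In the compulsory constrained two-facility location game described in the context, every deterministic strategyproof mechanism has approximation ratio at least $3$ under the maximum cost objective.
   Context: An instance consists of $n$ agents with private locations $x_1,\dots,x_n\in\mathbb{R}$, each served by both facilities $F_1,F_2$, and a finite multiset $A=\{a_1\le\dots\le a_m\}$ of real alternative locations. A deterministic mechanism $f$ maps each instance (reported locations and $A$) to $(y_1,y_2)$ with $y_1\in A$, $y_2\in A\setminus\{y_1\}$ (one copy removed). Agent $j$'s cost is $\max\{|y_1-x_j|,|y_2-x_j|\}$; the maximum cost is $\max_j$ of agents' costs. $f$ is strategyproof if no agent can strictly decrease her true cost by misreporting her own location, whatever the others report. The approximation ratio is the supremum over instances of $f$'s maximum cost divided by the optimal (minimum over feasible outcomes) maximum cost. *)

(* Defs.v *)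
From Stdlib Require Import Reals List.
Open Scope R_scope.

(* Remove ONE copy of a from the list l (multiset difference A \ {y1}). *)
Fixpoint remove1 (a : R) (l : list R) : list R :=
  match l with
  | nil => nil
  | b :: l' => if Req_EM_T a b then l' else b :: remove1 a l'
  end.

Definition feasible (A : list R) (y : R * R) : Prop :=
  In (fst y) A /\ In (snd y) (remove1 (fst y) A).

(* Cost of an agent at x: served by both facilities. *)
Definition agent_cost (y : R * R) (x : R) : R :=
  Rmax (Rabs (fst y - x)) (Rabs (snd y - x)).

(* Maximum cost over all agents (costs are >= 0, so 0 is a neutral base). *)
Definition max_cost (xs : list R) (y : R * R) : R :=
  fold_right (fun x acc => Rmax (agent_cost y x) acc) 0 xs.

Definition is_opt (xs A : list R) (c : R) : Prop :=
  (exists y, feasible A y /\ max_cost xs y = c) /\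
  (forall y, feasible A y -> c <= max_cost xs y).

(* A deterministic mechanism: agents' reported locations, alternatives |-> outcome. *)
Definition mechanism := list R -> list R -> R * R.

Definition feasible_mech (f : mechanism) : Prop :=
  forall xs A, (2 <= length A)%nat -> feasible A (f xs A).

Definition misreport (xs : list R) (i : nat) (x' : R) : list R :=
  firstn i xs ++ x' :: skipn (S i) xs.

Definition strategyproof (f : mechanism) : Prop :=
  forall xs A, (2 <= length A)%nat ->
  forall i x', (i < length xs)%nat ->
    agent_cost (f xs A) (nth i xs 0) <=
    agent_cost (f (misreport xs i x') A) (nth i xs 0).

(* Main.v *)
Require Import Defs.
From Stdlib Require Import Reals List Lra Lia.
Open Scope R_scope.
Import ListNotations.

Lemma in_remove1 : forall a x l, In x (remove1 a l) -> In x l.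
Proof.
  intros a x l; induction l as [|b l IH]; simpl; auto.
  destruct (Req_EM_T a b); simpl; intuition.
Qed.

Lemma feasA : forall y, feasible [0;0;2;2] y ->
  (fst y = 0 \/ fst y = 2) /\ (snd y = 0 \/ snd y = 2).
Proof.
  intros y [H1 H2]. apply in_remove1 in H2. simpl in H1, H2.
  split; intuition.
Qed.

Lemma eps_ex : forall rho, rho < 3 -> exists e, 0 < e /\ e <= 1/2 /\ rho * (1 + e) < 3.
Proof.
  intros rho H. destruct (Rle_dec rho 0).
  - exists (1/2). split; [lra|split;[lra|nra]].
  - exists ((3 - rho)/6). split; [lra|split;[lra|nra]].
Qed.

Ltac simpabs :=
  repeat match goal with
  | H : context [Rabs ?x] |- _ =>
      first [ rewrite (Rabs_pos_eq x) in H by lra | rewrite (Rabs_left x) in H by lra ]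
  | |- context [Rabs ?x] =>
      first [ rewrite (Rabs_pos_eq x) by lra | rewrite (Rabs_left x) by lra ]
  end.

Ltac simpmax :=
  repeat match goal with
  | H : context [Rmax ?a ?b] |- _ =>
      first [ rewrite (Rmax_left a b) in H by lra | rewrite (Rmax_right a b) in H by lra ]
  | |- context [Rmax ?a ?b] =>
      first [ rewrite (Rmax_left a b) by lra | rewrite (Rmax_right a b) by lra ]
  end.

Ltac crush := simpabs; simpmax; lra.

Lemma feas22 : feasible [0;0;2;2] (2,2).
Proof.
  unfold feasible; simpl. split; [tauto|].
  repeat (destruct Req_EM_T; try lra); simpl; tauto.
Qed.

Lemma feas00 : feasible [0;0;2;2] (0,0).
Proof.
  unfold feasible; simpl. split; [tauto|].
  repeat (destruct Req_EM_T; try lra); simpl; tauto.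
Qed.

Theorem theorem3 :
  forall f : mechanism, feasible_mech f -> strategyproof f ->
  forall rho : R, rho < 3 ->
  exists (xs A : list R) (c : R),
    (2 <= length A)%nat /\ xs <> nil /\ is_opt xs A c /\ 0 < c /\
    rho * c < max_cost xs (f xs A).
Proof.
  intros f Hf Hsp rho Hrho.
  destruct (eps_ex rho Hrho) as [e [He1 [He2 He3]]].
  assert (HA : (2 <= length [0;0;2;2])%nat) by (simpl; lia).
  pose proof (Hf [1-e;1+e] [0;0;2;2] HA) as F0.
  destruct (f [1-e;1+e] [0;0;2;2]) as [y1 y2] eqn:E0.
  apply feasA in F0; simpl in F0.
  destruct (Req_EM_T y1 2) as [Hy1|Hy1];
  [destruct (Req_EM_T y2 2) as [Hy2|Hy2]|].
  -
    exists [-1;1+e], [0;0;2;2], (1+e).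
    pose proof (Hsp [1-e;1+e] [0;0;2;2] HA 0%nat (-1) ltac:(simpl; lia)) as S.
    rewrite E0 in S. unfold misreport in S; simpl in S.
    pose proof (Hf [-1;1+e] [0;0;2;2] HA) as F1.
    destruct (f [-1;1+e] [0;0;2;2]) as [z1 z2].
    apply feasA in F1; simpl in F1.
    split; [exact HA|]. split; [discriminate|]. split; [|split; [lra|]].
    + split.
      * exists (0,0). split; [exact feas00|]. unfold max_cost, agent_cost; simpl. crush.
      * intros [u v] Hy. apply feasA in Hy; simpl in Hy.
        unfold max_cost, agent_cost; simpl.
        destruct Hy as [[-> | ->] [-> | ->]]; crush.
    + apply Rlt_le_trans with 3; [exact He3|].
      unfold max_cost, agent_cost in *; simpl in *. subst y1 y2.
      destruct F1 as [[-> | ->] [-> | ->]]; crush.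
  - exists [1-e;3], [0;0;2;2], (1+e).
    pose proof (Hsp [1-e;1+e] [0;0;2;2] HA 1%nat 3 ltac:(simpl; lia)) as S.
    rewrite E0 in S. unfold misreport in S; simpl in S.
    pose proof (Hf [1-e;3] [0;0;2;2] HA) as F1.
    destruct (f [1-e;3] [0;0;2;2]) as [z1 z2].
    apply feasA in F1; simpl in F1.
    split; [exact HA|]. split; [discriminate|]. split; [|split; [lra|]].
    + split.
      * exists (2,2). split; [exact feas22|]. unfold max_cost, agent_cost; simpl. crush.
      * intros [u v] Hy. apply feasA in Hy; simpl in Hy.
        unfold max_cost, agent_cost; simpl.
        destruct Hy as [[-> | ->] [-> | ->]]; crush.
    + apply Rlt_le_trans with 3; [exact He3|].
      unfold max_cost, agent_cost in *; simpl in *.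
      assert (y2 = 0) by lra. subst y1 y2.
      destruct F1 as [[-> | ->] [-> | ->]]; crush.
  - exists [1-e;3], [0;0;2;2], (1+e).
    pose proof (Hsp [1-e;1+e] [0;0;2;2] HA 1%nat 3 ltac:(simpl; lia)) as S.
    rewrite E0 in S. unfold misreport in S; simpl in S.
    pose proof (Hf [1-e;3] [0;0;2;2] HA) as F1.
    destruct (f [1-e;3] [0;0;2;2]) as [z1 z2].
    apply feasA in F1; simpl in F1.
    split; [exact HA|]. split; [discriminate|]. split; [|split; [lra|]].
    + split.
      * exists (2,2). split; [exact feas22|]. unfold max_cost, agent_cost; simpl. crush.
      * intros [u v] Hy. apply feasA in Hy; simpl in Hy.
        unfold max_cost, agent_cost; simpl.
        destruct Hy as [[-> | ->] [-> | ->]]; crush.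
    + apply Rlt_le_trans with 3; [exact He3|].
      unfold max_cost, agent_cost in *; simpl in *.
      assert (y1 = 0) by lra. subst y1.
      destruct F0 as [_ [-> | ->]];
      destruct F1 as [[-> | ->] [-> | ->]]; crush.
Qed.
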